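(* Let $P$ be a Poisson tensor on $\mathbb{R}^3$, let $H\in C^\infty(\mathbb{R}^3)$, and let $S\in C^\infty(\mathbb{R}^3)$ be a Casimir function for $P$, i.e. $PdS=0$. Let $g$ be the symmetric tensor with components $g^{ij}=H^iH^j-\delta^{ij}\sum_k H^kH^k$. Then at every point of $\mathbb{R}^3$ the vectors $PdH$ and $gdS$ are orthogonal with respect to the Euclidean metric.
   Context: $\mathbb{R}^3$ carries the standard Euclidean metric $h$, used to identify tangent and cotangent spaces with $\mathbb{R}^3$; $H^i=H_i=\partial H/\partial x^i$ in standard coordinates. A Poisson tensor is a skew-symmetric bivector field whose bracket $\{F,G\}=dF\cdot PdG$ satisfies the Jacobi identity. *)

(* Defs.v *)
From HB Require Import structures.
From mathcomp Require Import all_boot all_order all_algebra.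
From mathcomp Require Import all_classical all_reals all_analysis.
Set Implicit Arguments. Unset Strict Implicit. Unset Printing Implicit Defensive.
Import Order.TTheory GRing.Theory Num.Theory.
Import numFieldNormedType.Exports.
Local Open Scope ring_scope.

Definition ebase (R : realType) (i : 'I_3) : 'rV[R]_3 := delta_mx 0 i.

Definition partial (R : realType) (i : 'I_3) (f : 'rV[R]_3 -> R) : 'rV[R]_3 -> R :=
  fun x => 'D_(ebase R i) f x.

Fixpoint iter_partial (R : realType) (l : seq 'I_3) (f : 'rV[R]_3 -> R) : 'rV[R]_3 -> R :=
  match l with
  | [::] => f
  | i :: l' => partial i (iter_partial l' f)
  end.

Definition smooth (R : realType) (f : 'rV[R]_3 -> R) : Prop :=
  forall l : seq 'I_3,
    continuous (iter_partial l f) /\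
    forall (i : 'I_3) (x : 'rV[R]_3), derivable (iter_partial l f) x (ebase R i).

Definition bivector (R : realType) := 'I_3 -> 'I_3 -> 'rV[R]_3 -> R.

Definition pbracket (R : realType) (P : bivector R) (F G : 'rV[R]_3 -> R) : 'rV[R]_3 -> R :=
  fun x => \sum_(i < 3) \sum_(j < 3) partial i F x * P i j x * partial j G x.

Definition poisson_tensor (R : realType) (P : bivector R) : Prop :=
  (forall i j, smooth (P i j)) /\
  (forall i j x, P i j x = - P j i x) /\
  (forall F G K, smooth F -> smooth G -> smooth K ->
     forall x, pbracket P F (pbracket P G K) x + pbracket P G (pbracket P K F) x
               + pbracket P K (pbracket P F G) x = 0).

Definition Pd (R : realType) (P : bivector R) (F : 'rV[R]_3 -> R) (x : 'rV[R]_3) (i : 'I_3) : R :=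
  \sum_(j < 3) P i j x * partial j F x.

Definition casimir (R : realType) (P : bivector R) (S : 'rV[R]_3 -> R) : Prop :=
  forall x i, Pd P S x i = 0.

Definition gH (R : realType) (H : 'rV[R]_3 -> R) (i j : 'I_3) (x : 'rV[R]_3) : R :=
  partial i H x * partial j H x
  - (i == j)%:R * \sum_(k < 3) partial k H x * partial k H x.

Definition gd (R : realType) (H S : 'rV[R]_3 -> R) (x : 'rV[R]_3) (i : 'I_3) : R :=
  \sum_(j < 3) gH H i j x * partial j S x.

Definition eucl_dot (R : realType) (u v : 'I_3 -> R) : R := \sum_(i < 3) u i * v i.

(* Main.v *)
Require Import Defs.
From HB Require Import structures.
From mathcomp Require Import all_boot all_order all_algebra.
From mathcomp Require Import all_classical all_reals all_analysis.
From mathcomp Require Import ring lra.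
Import GRing.Theory.
Local Open Scope ring_scope.

Definition o0 : 'I_3 := @Ordinal 3 0 isT.
Definition o1 : 'I_3 := @Ordinal 3 1 isT.
Definition o2 : 'I_3 := @Ordinal 3 2 isT.

Lemma sum3 (R : realType) (F : 'I_3 -> R) : \sum_(i < 3) F i = F o0 + F o1 + F o2.
Proof.
rewrite !big_ord_recl big_ord0 addr0 addrA.
by congr (F _ + F _ + F _); apply: val_inj.
Qed.

Theorem mainTheorem2 (R : realType) (P : bivector R) (H S : 'rV[R]_3 -> R) :
  poisson_tensor P -> smooth H -> smooth S -> casimir P S ->
  forall x : 'rV[R]_3, eucl_dot (Pd P H x) (gd H S x) = 0.
Proof.
move=> [_ [sk _]] _ _ cas x.
have c0 := cas x o0; have c1 := cas x o1; have c2 := cas x o2.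
move: c0 c1 c2; rewrite /eucl_dot /Pd /gd /gH !sum3 /=.
have d0 : P o0 o0 x = 0.
  by have := sk o0 o0 x; lra.
have d1 : P o1 o1 x = 0.
  by have := sk o1 o1 x; lra.
have d2 : P o2 o2 x = 0.
  by have := sk o2 o2 x; lra.
rewrite (sk o1 o0) (sk o2 o0) (sk o2 o1) d0 d1 d2.
set a := P o0 o1 x; set b := P o0 o2 x; set c := P o1 o2 x.
set h0 := partial o0 H x; set h1 := partial o1 H x; set h2 := partial o2 H x.
set s0 := partial o0 S x; set s1 := partial o1 S x; set s2 := partial o2 S x.
move=> e0 e1 e2.
apply: (@eq_trans _ _ ((h0*h0+h1*h1+h2*h2)*(h0*(0 * s0 + a * s1 + b * s2)
   + h1*(- a * s0 + 0 * s1 + c * s2) + h2*(- b * s0 + - c * s1 + 0 * s2)))).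
  ring.
by rewrite e0 e1 e2; ring.
Qed.
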